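(* Let $n\ge1$ and let $T\in\mathcal{L}(\mathcal{H})$ be $n$-EP. Then $T$ has finite ascent and finite descent, and moreover $\mathrm{asc}(T)\le n$ and $\mathrm{dsc}(T)\le n$.
   Context: $\mathcal{H}$ is a Hilbert space, $\mathcal{L}(\mathcal{H})$ the bounded operators on it; $N(\cdot)$ and $R(\cdot)$ denote kernel and range. The ascent is $\mathrm{asc}(T)=\min\{k\in\mathbb{N}: N(T^k)=N(T^{k+1})\}$ and the descent is $\mathrm{dsc}(T)=\min\{k\in\mathbb{N}: R(T^k)=R(T^{k+1})\}$ (each is $\infty$ if no such $k$ exists). For $T$ with closed range, $T^\dagger$ is its Moore–Penrose inverse (unique solution of $TT^\dagger T=T$, $T^\dagger TT^\dagger=T^\dagger$, $(T^\dagger T)^*=T^\dagger T$, $(TT^\dagger)^*=TT^\dagger$). $T$ is $n$-EP if it has closed range and $T^nT^\dagger=T^\dagger T^n$. *)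

(* Defs.v *)
From HB Require Import structures.
From mathcomp Require Import all_boot all_order all_algebra.
From mathcomp Require Import all_classical all_reals.
From mathcomp Require Import topology normedtype.
From mathcomp Require Import complex.
Set Implicit Arguments. Unset Strict Implicit. Unset Printing Implicit Defensive.
Import Order.TTheory GRing.Theory Num.Theory.
Import numFieldNormedType.Exports.
Local Open Scope classical_set_scope.
Local Open Scope ring_scope.
Local Open Scope complex_scope.

Record hilbert_inner (R : realType) (V : completeNormedModType R[i]) := HilbertInner {
  inner : V -> V -> R[i];
  inner_linear : forall (a : R[i]) (x z y : V),
      inner (a *: x + z) y = a * inner x y + inner z y;
  inner_conj : forall x y : V, inner y x = (inner x y)^*;
  inner_norm : forall x : V, inner x x = `|x| ^+ 2
}.

Section Ops.
Context (R : realType) (V : completeNormedModType R[i]) (H : hilbert_inner V).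

Definition bounded_op (T : V -> V) : Prop := linear T /\ continuous T.

Definition kernel (T : V -> V) : set V := [set x | T x = 0].
Definition rng (T : V -> V) : set V := range T.

Definition closed_range (T : V -> V) : Prop := closed (range T).

Definition self_adjoint (A : V -> V) : Prop :=
  forall x y, inner H (A x) y = inner H x (A y).

Definition MP_inverse (T S : V -> V) : Prop :=
  bounded_op S /\
  (forall x, T (S (T x)) = T x) /\
  (forall x, S (T (S x)) = S x) /\
  self_adjoint (S \o T) /\
  self_adjoint (T \o S).

Definition n_EP (n : nat) (T : V -> V) : Prop :=
  closed_range T /\
  exists S, MP_inverse T S /\ (forall x, iter n T (S x) = S (iter n T x)).

Definition is_ascent (T : V -> V) (p : nat) : Prop :=
  kernel (iter p T) = kernel (iter p.+1 T) /\
  (forall k, (k < p)%N -> kernel (iter k T) <> kernel (iter k.+1 T)).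

Definition is_descent (T : V -> V) (p : nat) : Prop :=
  rng (iter p T) = rng (iter p.+1 T) /\
  (forall k, (k < p)%N -> rng (iter k T) <> rng (iter k.+1 T)).

End Ops.

(* Main.v *)
Require Import Defs.
From HB Require Import structures.
From mathcomp Require Import all_boot all_order all_algebra.
From mathcomp Require Import all_classical all_reals.
From mathcomp Require Import topology normedtype.
From mathcomp Require Import complex.
Import Order.TTheory GRing.Theory Num.Theory.
Import numFieldNormedType.Exports.
Local Open Scope ring_scope.

Lemma min_exists (P : nat -> Prop) (n : nat) : P n ->
  exists p, P p /\ (forall k, (k < p)%N -> ~ P k) /\ (p <= n)%N.
Proof.
move=> Pn.
have ex : exists m, `[< P m >] by exists n; apply/asboolP.
case: (ex_minnP ex) => p /asboolP Pp minp.
exists p; split => //; split.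
  move=> k kp Pk.
  have := minp k (introT (asboolP _) Pk).
  by rewrite leqNgt kp.
by apply: minp; apply/asboolP.
Qed.

Section S.
Variables (R : realType) (V : completeNormedModType R[i]).

Lemma lin_add (f : V -> V) : linear f -> forall x y, f (x + y) = f x + f y.
Proof. by move=> lf x y; have := lf 1 x y; rewrite !scale1r. Qed.

Lemma lin_sub (f : V -> V) : linear f -> forall x y, f (x - y) = f x - f y.
Proof.
move=> lf x y; have := lf (-1) y x.
rewrite !scaleN1r => h; by rewrite addrC h addrC.
Qed.

Lemma lin_0 (f : V -> V) : linear f -> f 0 = 0.
Proof.
move=> lf; have := @lin_sub f lf 0 0.
by rewrite subrr => ->; rewrite subrr.
Qed.

Lemma iter_lin (f : V -> V) k : linear f -> linear (iter k f).
Proof.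
move=> lf; elim: k => [|k IH] a x y /=; first by [].
by rewrite IH lf.
Qed.
End S.

Theorem mainTheorem19 (R : realType) (V : completeNormedModType R[i])
    (H : hilbert_inner V) (n : nat) (T : V -> V) :
  (1 <= n)%N -> bounded_op T -> n_EP H n T ->
  (exists p, is_ascent T p /\ (p <= n)%N) /\
  (exists q, is_descent T q /\ (q <= n)%N).
Proof.
move=> n1 [lT _] [_ [S [[[lS _] [TST [STS _]]] comm]]].
have lTn := @iter_lin _ _ T n lT : linear (iter n T).
split.
  have Pn : kernel (iter n T) = kernel (iter n.+1 T).
    rewrite /kernel; apply/seteqP; split => x /=.
      move=> h; rewrite h; exact: lin_0.
    move=> h.
    have h1 : iter n T (S (T x)) = 0.
      by rewrite comm -iterSr /= h; exact: lin_0.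
    have h2 : T (x - S (T x)) = 0 by rewrite (@lin_sub _ _ T) // TST subrr.
    have -> : x = S (T x) + (x - S (T x)) by rewrite addrC subrK.
    rewrite (@lin_add _ _ (iter n T)) // h1 add0r.
    case: n n1 {lTn comm h h1} => // m _.
    rewrite iterSr h2; apply: lin_0; exact: iter_lin.
  have [p [Pp [minp pn]]] := @min_exists (fun k => kernel (iter k T) = kernel (iter k.+1 T)) n Pn.
  by exists p; split => //; split.
have Pn : rng (iter n T) = rng (iter n.+1 T).
  rewrite /rng; apply/seteqP; split => y /= [x _ <-].
    exists (S x) => //.
    rewrite comm.
    case: n n1 {lTn comm} => // m _.
    by rewrite iterS TST.
  by exists (T x) => //; symmetry; exact: iterSr.
have [p [Pp [minp pn]]] := @min_exists (fun k => rng (iter k T) = rng (iter k.+1 T)) n Pn.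
by exists p; split => //; split.
Qed.
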